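(* Let $X$ be a separable Banach space, $\mu_{\mathrm{prior}}$ a Borel probability measure on $X$, $\mathcal L^\dagger:X\to\mathbb R^d$ measurable with $\|\mathcal L^\dagger\|_{L^2(\mu_{\mathrm{prior}})}<\infty$, and the noise density $\rho$ satisfy (N.1)–(N.3). Let $\mu^y(d\bar u)=Z^\dagger(y)^{-1}\rho(y-\mathcal L^\dagger(\bar u))\mu_{\mathrm{prior}}(d\bar u)$. There is $C>0$ depending only on $\rho$ such that for all $y,y'\in\mathbb R^d$, $$\Big\|\frac{d\mu^y}{d\mu_{\mathrm{prior}}}-\frac{d\mu^{y'}}{d\mu_{\mathrm{prior}}}\Big\|_{L^\infty(\mu_{\mathrm{prior}})}\le C|y-y'|_\Gamma\exp\big(|y|_\Gamma^2+|y'|_\Gamma^2+2\|\mathcal L^\dagger\|_{L^2(\mu_{\mathrm{prior}})}^2\big).$$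
   Context: $Z^\dagger(y)=\int_X\rho(y-\mathcal L^\dagger(\bar u))\mu_{\mathrm{prior}}(d\bar u)$. $|y|_\Gamma=\langle y,\Gamma^{-1}y\rangle^{1/2}$ for fixed symmetric positive definite $\Gamma$; $\|\mathcal L^\dagger\|_{L^2(\mu_{\mathrm{prior}})}=(\int|\mathcal L^\dagger|_\Gamma^2d\mu_{\mathrm{prior}})^{1/2}$. Noise density $\rho>0$: (N.1) $\rho$ Lipschitz w.r.t. $|\cdot|_\Gamma$ with constant $L_\rho$; (N.2) $\sup\rho<\infty$; (N.3) $\rho(y)\ge C^{-1}e^{-|y|_\Gamma^2/2}$. *)

(* Defs.v *)
From HB Require Import structures.
From mathcomp Require Import all_boot all_order all_algebra.
From mathcomp Require Import all_classical all_reals all_analysis.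
Set Implicit Arguments. Unset Strict Implicit. Unset Printing Implicit Defensive.
Import Order.TTheory GRing.Theory Num.Theory.
Import numFieldNormedType.Exports.
Local Open Scope classical_set_scope.
Local Open Scope ring_scope.

Definition borel (X : ptopologicalType) : measurableType _ :=
  g_sigma_algebraType (@open X).

Definition normG {R : realType} {d : nat} (Gamma : 'M[R]_d) (y : 'cV[R]_d) : R :=
  Num.sqrt ((y^T *m invmx Gamma *m y) 0 0).

Definition sym_pos_def {R : realType} {d : nat} (Gamma : 'M[R]_d) : Prop :=
  Gamma^T = Gamma /\ forall v : 'cV[R]_d, v != 0 -> 0 < (v^T *m Gamma *m v) 0 0.

Definition noise_assumptions {R : realType} {d : nat} (Gamma : 'M[R]_d)
  (rho : 'cV[R]_d -> R) : Prop :=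
  (forall y, 0 < rho y) /\
  (exists Lrho : R, 0 <= Lrho /\
     forall y z, `|rho y - rho z| <= Lrho * normG Gamma (y - z)) /\
  (exists M : R, forall y, rho y <= M) /\
  (exists C : R, 0 < C /\
     forall y, C^-1 * expR (- (normG Gamma y ^+ 2) / 2) <= rho y).

Definition Zdag {R : realType} {d : nat} {X : ptopologicalType}
  (mu : probability (borel X) R) (rho : 'cV[R]_d -> R) (L : X -> 'cV[R]_d)
  (y : 'cV[R]_d) : R :=
  fine (\int[mu]_(u in setT) (rho (y - L u))%:E)%E.

Definition post_density {R : realType} {d : nat} {X : ptopologicalType}
  (mu : probability (borel X) R) (rho : 'cV[R]_d -> R) (L : X -> 'cV[R]_d)
  (y : 'cV[R]_d) (u : X) : R :=
  rho (y - L u) / Zdag mu rho L y.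

Definition L2norm_sq {R : realType} {d : nat} {X : ptopologicalType}
  (mu : probability (borel X) R) (Gamma : 'M[R]_d) (L : X -> 'cV[R]_d) : R :=
  fine (\int[mu]_(u in setT) ((normG Gamma (L u)) ^+ 2)%:E)%E.

(* Main.v *)
Require Import Defs.
From HB Require Import structures.
From mathcomp Require Import all_boot all_order all_algebra.
From mathcomp Require Import all_classical all_reals all_analysis.
From mathcomp Require Import ring lra.
From mathcomp Require Import measurable_realfun.
Import Order.TTheory GRing.Theory Num.Theory.
Import numFieldNormedType.Exports.
Local Open Scope classical_set_scope.
Local Open Scope ring_scope.
Set Implicit Arguments. Unset Strict Implicit.

Section Quad.
Variables (R : realType) (d : nat) (Gamma : 'M[R]_d).

Definition qf (v : 'cV[R]_d) : R :=
  \sum_j (\sum_i v i 0 * invmx Gamma i j) * v j 0.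

Lemma qfE v : (v^T *m invmx Gamma *m v) 0 0 = qf v.
Proof.
rewrite !mxE; apply: eq_bigr => j _; rewrite !mxE; congr (_ * _).
by apply: eq_bigr => i _; rewrite !mxE.
Qed.

Hypothesis spd : sym_pos_def Gamma.

Lemma qf_ge0 v : 0 <= qf v.
Proof.
case: spd => sym pos.
have pos0 (w : 'cV[R]_d) : 0 <= (w^T *m Gamma *m w) 0 0.
  have [->|w0] := eqVneq w 0; last exact/ltW/pos.
  by rewrite mulmx0 mxE.
rewrite -qfE.
case: (boolP (Gamma \in unitmx)) => U; last first.
  by rewrite invmx_out ?inE //; exact: pos0.
set w := invmx Gamma *m v.
have -> : v = Gamma *m w by rewrite /w mulKVmx.
rewrite trmx_mul -!mulmxA (mulmxA (invmx Gamma)) mulVmx // mul1mx sym mulmxA.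
exact: pos0.
Qed.

Lemma normG_sq v : normG Gamma v ^+ 2 = qf v.
Proof. by rewrite /normG qfE sqr_sqrtr // qf_ge0. Qed.

Lemma qf_sub a b : qf (a - b) <= 2 * qf a + 2 * qf b.
Proof.
have H : qf (a - b) + qf (a + b) = 2 * qf a + 2 * qf b.
  rewrite /qf !mulr_sumr -!big_split /=; apply: eq_bigr => j _.
  rewrite !mxE !mulr_suml !mulr_sumr -!big_split /=; apply: eq_bigr => i _.
  rewrite !mxE; ring.
have := qf_ge0 (a + b); lra.
Qed.

Definition Ssum := \sum_j \sum_i `|invmx Gamma i j|.

Lemma Ssum_ge0 : 0 <= Ssum.
Proof. by apply: sumr_ge0 => j _; apply: sumr_ge0 => i _. Qed.

Lemma qf_small (v : 'cV[R]_d) (del : R) : 0 <= del -> (forall i, `|v i 0| <= del) ->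
  qf v <= Ssum * del ^+ 2.
Proof.
move=> d0 vd; rewrite /Ssum mulr_suml.
apply: le_trans (ler_norm _) _.
apply: le_trans (ler_norm_sum _ _ _) _; apply: ler_sum => j _.
rewrite normrM.
have h1 : `|\sum_i v i 0 * invmx Gamma i j| <= (\sum_i `|invmx Gamma i j|) * del.
  rewrite mulr_suml; apply: le_trans (ler_norm_sum _ _ _) _.
  apply: ler_sum => i _; rewrite normrM mulrC.
  apply: ler_wpM2l; first exact: normr_ge0. exact: vd.
have h2 := vd j.
have h3 : 0 <= \sum_i `|invmx Gamma i j| by apply: sumr_ge0.
have := normr_ge0 (v j 0); have := normr_ge0 (\sum_i v i 0 * invmx Gamma i j).
nra.
Qed.
End Quad.

Section Dense.
Variables (R : realType) (d : nat) (Gamma : 'M[R]_d).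
Hypothesis spd : sym_pos_def Gamma.

Definition qs (n : nat) : 'cV[R]_d :=
  if @unpickle 'cV[rat]_d n is Some M then map_mx ratr M else 0.

Lemma normG_E v : normG Gamma v = Num.sqrt (qf Gamma v).
Proof. by rewrite /normG qfE. Qed.

Lemma normG_ge0 v : 0 <= normG Gamma v.
Proof. exact: sqrtr_ge0. Qed.

Lemma qs_dense (x : 'cV[R]_d) (e : R) : 0 < e ->
  exists n, normG Gamma (x - qs n) < e.
Proof.
move=> e0.
have S0 := Ssum_ge0 Gamma.
set del := e / (Ssum Gamma + 1).
have del0 : 0 < del by apply: divr_gt0 => //; lra.
have : forall ij : 'I_d * 'I_1, exists q : rat,
    ratr q \in `]x ij.1 ij.2 - del, x ij.1 ij.2 + del[.
  move=> ij; apply: rat_in_itvoo; lra.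
case/fin_all_exists => f Hf.
pose M : 'cV[rat]_d := \matrix_(i, j) f (i, j).
exists (pickle M).
have -> : qs (pickle M) = map_mx ratr M by rewrite /qs pickleK.
have Hq : qf Gamma (x - map_mx ratr M) <= Ssum Gamma * del ^+ 2.
  apply: qf_small; first exact: ltW.
  move=> i; rewrite !mxE; have := Hf (i, 0); rewrite in_itv /= => /andP[h1 h2].
  rewrite ler_norml; apply/andP; split; lra.
have Hd : Ssum Gamma * del ^+ 2 < e ^+ 2.
  have -> : e = del * (Ssum Gamma + 1).
    rewrite /del divfK //; apply: lt0r_neq0; lra.
  nra.
have n0 := normG_ge0 (x - map_mx ratr M).
have hs : normG Gamma (x - map_mx ratr M) ^+ 2 < e ^+ 2.
  by rewrite normG_sq //; lra.
case: (ltP (normG Gamma (x - map_mx ratr M)) e) => // H; exfalso; nra.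
Qed.
End Dense.

Section Meas.
Variables (R : realType) (d : nat) (Gamma : 'M[R]_d).
Hypothesis spd : sym_pos_def Gamma.
Variables (dd : measure_display) (T : measurableType dd).

Lemma meas_qf (F : T -> 'cV[R]_d) :
  (forall i, measurable_fun setT (fun u => F u i 0)) ->
  measurable_fun setT (fun u => qf Gamma (F u)).
Proof.
move=> mF; rewrite /qf; apply: measurable_sum => j.
apply: measurable_realfun.measurable_funM => //; apply: measurable_sum => i.
by apply: measurable_realfun.measurable_funM => //; exact: measurable_cst.
Qed.

Lemma meas_normG (F : T -> 'cV[R]_d) :
  (forall i, measurable_fun setT (fun u => F u i 0)) ->
  measurable_fun setT (fun u => normG Gamma (F u)).
Proof.
move=> mF; under eq_fun do rewrite normG_E.
apply: measurableT_comp; first exact: (@measurable_realfun.continuous_measurable_fun R _ (@sqrt_continuous R)).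
exact: meas_qf.
Qed.

Lemma meas_rho (rho : 'cV[R]_d -> R) (Lr : R) :
  0 <= Lr -> (forall y z, `|rho y - rho z| <= Lr * normG Gamma (y - z)) ->
  forall F : T -> 'cV[R]_d,
  (forall i, measurable_fun setT (fun u => F u i 0)) ->
  measurable_fun setT (fun u => (rho (F u))%:E).
Proof.
move=> Lr0 Hlip F mF.
pose h (n : nat) (u : T) := (rho (@qs R d n) + Lr * normG Gamma (F u - @qs R d n))%:E.
have mh : forall n, measurable_fun setT (h n).
  move=> n; apply/measurable_EFinP; apply: measurable_realfun.measurable_funD; first exact: measurable_cst.
  apply: measurable_realfun.measurable_funM; first exact: measurable_cst.
  apply: meas_normG => i.
  under eq_fun do rewrite !mxE.
  by apply: measurable_realfun.measurable_funB => //; exact: measurable_cst.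
have := measurable_fun_einfs mh 0.
apply: eq_measurable_fun => u _.
apply/eqP; rewrite eq_le; apply/andP; split.
- apply/lee_addgt0Pr => e e0.
  have e1 : 0 < e / (2 * Lr + 1) by apply: divr_gt0 => //; lra.
  have [n Hn] := qs_dense spd (F u) e1.
  apply: ge_ereal_inf; exists (h n u); first by exists n.
  rewrite /h lee_fin.
  have := Hlip (F u) (@qs R d n); rewrite ler_norml => /andP[h1 h2].
  move: Hn; rewrite ltr_pdivlMr; last lra.
  have := normG_ge0 Gamma (F u - @qs R d n).
  nra.
- apply/ereal_infP => _ [k _ <-]; rewrite /h lee_fin.
  have := Hlip (F u) (@qs R d k); rewrite ler_norml => /andP[h1 h2].
  lra.
Qed.
End Meas.

Lemma final_alg (R : realType) (a b Z Z' Lr M C0 del Ey Ey' : R) :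
  0 < C0 -> 0 <= Lr -> 0 < Z -> 0 < Z' -> 0 <= b -> b <= M ->
  `|a - b| <= Lr * del -> `|Z - Z'| <= Lr * del -> 0 <= del ->
  1 <= Ey -> 1 <= Ey' -> 1 <= C0 * Ey * Z -> 1 <= C0 * Ey' * Z' ->
  `|a / Z - b / Z'| <= (Lr * C0 + `|M| * Lr * C0 ^+ 2 + 1) * del * (Ey * Ey').
Proof.
move=> C00 Lr0 Z0 Z'0 b0 bM hab hZ del0 E1 E1' hE hE'.
have u0 : 0 < Z^-1 by rewrite invr_gt0.
have v0 : 0 < Z'^-1 by rewrite invr_gt0.
have iZ : Z^-1 <= C0 * Ey.
  have -> : C0 * Ey = C0 * Ey * Z * Z^-1 by rewrite -mulrA divff ?mulr1 // gt_eqF.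
  by rewrite -[leLHS]mul1r ler_wpM2r // ltW.
have iZ' : Z'^-1 <= C0 * Ey'.
  have -> : C0 * Ey' = C0 * Ey' * Z' * Z'^-1 by rewrite -mulrA divff ?mulr1 // gt_eqF.
  by rewrite -[leLHS]mul1r ler_wpM2r // ltW.
have -> : a / Z - b / Z' = (a - b) * Z^-1 + b * (Z' - Z) * (Z^-1 * Z'^-1).
  by field; apply/andP; split; rewrite gt_eqF.
apply: le_trans (ler_normD _ _) _.
rewrite !normrM (gtr0_norm u0) (gtr0_norm v0) (ger0_norm b0) [`|Z' - Z|]distrC.
set p := `|a - b|; set q := `|Z - Z'|.
have p0 : 0 <= p by exact: normr_ge0.
have q0 : 0 <= q by exact: normr_ge0.
have Ey0 : 0 <= C0 * Ey by apply: mulr_ge0; lra.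
have Ey0' : 0 <= C0 * Ey' by apply: mulr_ge0; lra.
have h1 : p * Z^-1 <= Lr * del * (C0 * Ey) by apply: ler_pM => //; exact: ltW.
have h2 : b * q <= `|M| * (Lr * del).
  apply: ler_pM => //; apply: le_trans bM (real_ler_norm _); exact: num_real.
have h3 : Z^-1 * Z'^-1 <= (C0 * Ey) * (C0 * Ey') by apply: ler_pM => //; exact: ltW.
have h4 : b * q * (Z^-1 * Z'^-1) <= `|M| * (Lr * del) * ((C0 * Ey) * (C0 * Ey')).
  by apply: ler_pM => //; [apply: mulr_ge0 | apply: mulr_ge0; exact: ltW].
have h5 : Lr * del * (C0 * Ey) <= Lr * del * (C0 * Ey) * Ey'.
  by rewrite ler_peMr //; apply: mulr_ge0 => //; apply: mulr_ge0.
have h6 : 0 <= del * (Ey * Ey') by apply: mulr_ge0 => //; apply: mulr_ge0; lra.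
have E : (Lr * C0 + `|M| * Lr * C0 ^+ 2 + 1) * del * (Ey * Ey') =
  Lr * del * (C0 * Ey) * Ey' + `|M| * (Lr * del) * ((C0 * Ey) * (C0 * Ey')) + del * (Ey * Ey').
  by ring.
rewrite E.
lra.
Qed.

Lemma jensen_exp (R : realType) (dd : measure_display) (T : measurableType dd)
  (mu : probability T R) (g : T -> R) :
  (forall u, 0 <= g u) -> measurable_fun setT g ->
  (\int[mu]_(u in setT) (g u)%:E < +oo)%E ->
  ((expR (- fine (\int[mu]_(u in setT) (g u)%:E)))%:E <=
     \int[mu]_(u in setT) (expR (- g u))%:E)%E.
Proof.
move=> g0 mg gfin.
set I := (\int[mu]_(u in setT) (g u)%:E)%E.
have I0 : (0 <= I)%E by apply: integral_ge0 => u _; rewrite lee_fin.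
have Ifin : I \is a fin_num by rewrite ge0_fin_numE.
set m := fine I.
have Im : I = m%:E by rewrite fineK.
set e := expR (- m).
have e0 : 0 < e by exact: expR_gt0.
have m0 : 0 <= m by rewrite -lee_fin -Im.
have meg : measurable_fun setT (fun u => expR (- g u)).
  by apply: measurableT_comp => //; apply: measurableT_comp.
have meE : measurable_fun setT (fun u => (expR (- g u))%:E) by apply/measurable_EFinP.
have mgE : measurable_fun setT (fun u => (e * g u)%:E).
  by apply/measurable_EFinP; apply: measurable_realfun.measurable_funM => //; exact: measurable_cst.
have pt : forall u : T, ((e * (1 + m))%:E <= (expR (- g u))%:E + (e * g u)%:E)%E.
  move=> u; rewrite -EFinD lee_fin.
  have h1 := expR_ge1Dx (m - g u).
  have h2 : expR (- g u) = e * expR (m - g u).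
    by rewrite /e -expRD; congr expR; ring.
  rewrite h2; nra.
have J0 : (0 <= \int[mu]_(u in setT) (expR (- g u))%:E)%E.
  by apply: integral_ge0 => u _; rewrite lee_fin ltW // expR_gt0.
have Ieg : (\int[mu]_(u in setT) (e * g u)%:E = (e * m)%:E)%E.
  under eq_integral do rewrite EFinM.
  rewrite ge0_integralZl_EFin //.
  - by rewrite -/I Im -EFinM.
  - by move=> u _; rewrite lee_fin.
  - exact/measurable_EFinP.
  - exact: ltW.
have H : ((e * (1 + m))%:E <= \int[mu]_(u in setT) (expR (- g u))%:E + (e * m)%:E)%E.
{ have := @ge0_le_integral _ _ _ mu setT measurableT (fun _ => (e * (1 + m))%:E)
    (fun u => (expR (- g u))%:E + (e * g u)%:E)%E.
  rewrite integral_cst //.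
  have -> : forall M1, M1 = mu [set: T] -> ((e * (1 + m))%:E * M1 = (e * (1 + m))%:E)%E.
    by move=> M1 ->; rewrite probability_setT mule1.
  rewrite ge0_integralD //; last first.
  - by move=> u _; rewrite lee_fin; apply: mulr_ge0 => //; exact: ltW.
  rewrite Ieg; move=> H; apply: H.
  - by move=> u _; rewrite lee_fin; apply: mulr_ge0; [exact: ltW | lra].
  - exact: measurable_cst.
  - apply: emeasurable_funD; first exact: meE.
    exact: mgE.
  - by move=> u _; exact: pt.
  - by []. }
move: J0 H.
case: (\int[mu]_(u in setT) (expR (- g u))%:E)%E => [r| |] //.
- rewrite -EFinD !lee_fin => r0 H; nra.
- by move=> _ _; rewrite leey.
Qed.

Section Main.
Variables (R : realType) (d : nat) (Gamma : 'M[R]_d) (rho : 'cV[R]_d -> R).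
Hypothesis spd : sym_pos_def Gamma.
Variables (Lr C0 M : R).
Hypothesis rpos : forall y, 0 < rho y.
Hypothesis Lr0 : 0 <= Lr.
Hypothesis Hlip : forall y z, `|rho y - rho z| <= Lr * normG Gamma (y - z).
Hypothesis HM : forall y, rho y <= M.
Hypothesis C00 : 0 < C0.
Hypothesis HC : forall y, C0^-1 * expR (- (normG Gamma y ^+ 2) / 2) <= rho y.
Variables (X : completeNormedModType R) (mu : probability (borel X) R)
  (L : X -> 'cV[R]_d).
Hypothesis mL : forall i : 'I_d, measurable_fun [set: borel X] (fun u : borel X => L u i 0).
Hypothesis Lfin : (\int[mu]_(u in [set: borel X]) ((normG Gamma (L u)) ^+ 2)%:E < +oo)%E.

Lemma Zfacts (z : 'cV[R]_d) :
  [/\ measurable_fun setT (fun u : borel X => rho (z - L u)),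
      mu.-integrable setT (EFin \o (fun u : borel X => rho (z - L u))),
      (Zdag mu rho L z)%:E = (\int[mu]_(u in setT) (rho (z - L u))%:E)%E,
      0 < Zdag mu rho L z &
      1 <= C0 * expR (normG Gamma z ^+ 2 + L2norm_sq mu Gamma L) * Zdag mu rho L z].
Proof.
set a := fun u : borel X => rho (z - L u).
have maE : measurable_fun setT (fun u : borel X => (a u)%:E).
  apply: (@meas_rho _ _ _ spd _ (borel X) rho Lr Lr0 Hlip (fun u => z - L u)) => i.
  under eq_fun do rewrite !mxE.
  by apply: measurable_realfun.measurable_funB => //; exact: measurable_cst.
have ma : measurable_fun setT a by exact: (measurable_EFinP setT a).1 maE.
have M0 : 0 < M by exact: lt_le_trans (rpos 0) (HM 0).
have a0 : forall u : borel X, (0 <= (a u)%:E)%E.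
  by move=> u; rewrite lee_fin; exact: ltW (rpos _).
have Ile : (\int[mu]_(u in setT) (a u)%:E <= M%:E)%E.
  have := @ge0_le_integral _ _ _ mu setT measurableT (fun u => (a u)%:E) (fun _ => M%:E).
  rewrite integral_cst //.
  have -> : forall M1, M1 = mu [set: borel X] -> (M%:E * M1 = M%:E)%E.
    by move=> M1 ->; rewrite probability_setT mule1.
  move=> H; apply: H => //.
  - by move=> u _; rewrite lee_fin; exact: HM.
  - by [].
have Ige0 : (0 <= \int[mu]_(u in setT) (a u)%:E)%E by apply: integral_ge0.
have Ifin : (\int[mu]_(u in setT) (a u)%:E)%E \is a fin_num.
  by rewrite ge0_fin_numE //; apply: le_lt_trans Ile (ltry _).
have aint : mu.-integrable setT (EFin \o a).
  apply/integrableP; split; first exact: maE.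
  rewrite (eq_integral (fun u => (a u)%:E)); last first.
    by move=> u _ /=; rewrite ger0_norm //; exact: ltW (rpos _).
  by apply: le_lt_trans Ile (ltry _).
have Zeq : (Zdag mu rho L z)%:E = (\int[mu]_(u in setT) (a u)%:E)%E.
  by rewrite /Zdag fineK.
set m := L2norm_sq mu Gamma L.
set g := fun u : borel X => normG Gamma (L u) ^+ 2.
have g0 : forall u, 0 <= g u by move=> u; exact: sqr_ge0.
have mg : measurable_fun setT g.
  rewrite /g; under eq_fun do rewrite normG_sq //.
  exact: meas_qf.
have J := jensen_exp g0 mg Lfin.
set c := C0^-1 * expR (- (normG Gamma z ^+ 2)).
have c0 : 0 < c by apply: mulr_gt0; [rewrite invr_gt0 | exact: expR_gt0].
have mcg : measurable_fun setT (fun u : borel X => (expR (- g u))%:E).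
  apply/measurable_EFinP; apply: measurableT_comp => //; exact: measurableT_comp.
have step1 : (\int[mu]_(u in setT) (c%:E * (expR (- g u))%:E) <=
    \int[mu]_(u in setT) (a u)%:E)%E.
  apply: ge0_le_integral => //.
  - by move=> u _; rewrite -EFinM lee_fin; apply: mulr_ge0; [exact: ltW | exact: ltW (expR_gt0 _)].
  - by apply: emeasurable_funM => //; exact: measurable_cst.
  move=> u _; rewrite -EFinM lee_fin.
  apply: le_trans (HC (z - L u)).
  rewrite /c -mulrA; apply: ler_wpM2l; first by rewrite invr_ge0 ltW.
  rewrite -expRD ler_expR /g !normG_sq //.
  have := qf_sub spd z (L u); lra.
have f1pos : forall u : borel X, [set: borel X] u -> (0 <= (expR (- g u))%:E)%E.
  by move=> u _; rewrite lee_fin ltW // expR_gt0.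
rewrite (@ge0_integralZl_EFin _ _ _ mu setT measurableT (fun u => (expR (- g u))%:E) f1pos mcg c (ltW c0)) in step1.
have low : (c * expR (- m) <= Zdag mu rho L z).
  rewrite -lee_fin Zeq; apply: le_trans step1.
  by rewrite EFinM; apply: lee_wpmul2l => //; rewrite lee_fin ltW.
have lowp : 0 < c * expR (- m) by apply: mulr_gt0 => //; exact: expR_gt0.
split => //.
- exact: lt_le_trans low.
- have -> : 1 = C0 * expR (normG Gamma z ^+ 2 + m) * (c * expR (- m)).
    rewrite /c expRD !expRN; field.
    by apply/and3P; split; rewrite gt_eqF // expR_gt0.
  apply: ler_wpM2l => //; apply: mulr_ge0; [exact: ltW | exact: ltW (expR_gt0 _)].
Qed.

Lemma diff_bound (y y' : 'cV[R]_d) :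
  (Lnorm mu +oo (fun u : borel X =>
      (post_density mu rho L y u - post_density mu rho L y' u)%:E)
   <= ((Lr * C0 + `|M| * Lr * C0 ^+ 2 + 1) * normG Gamma (y - y')
         * expR (normG Gamma y ^+ 2 + normG Gamma y' ^+ 2
                 + 2 * L2norm_sq mu Gamma L))%:E)%E.
Proof.
have [ma ia Ze Z0 Z1] := Zfacts y.
have [mb ib Ze' Z0' Z1'] := Zfacts y'.
set Z := Zdag mu rho L y in Ze Z0 Z1 *.
set Z' := Zdag mu rho L y' in Ze' Z0' Z1' *.
set m := L2norm_sq mu Gamma L in Z1 Z1' *.
set del := normG Gamma (y - y').
have del0 : 0 <= del by exact: normG_ge0.
have pab : forall u : borel X, `|rho (y - L u) - rho (y' - L u)| <= Lr * del.
  move=> u; have := Hlip (y - L u) (y' - L u).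
  suff -> : (y - L u) - (y' - L u) = y - y' by [].
  by rewrite opprB addrA subrK.
have hZ : `|Z - Z'| <= Lr * del.
  rewrite -lee_fin -abse_EFin EFinB Ze Ze'.
  rewrite -(integralB_EFin measurableT ia ib).
  apply: le_trans (le_abse_integral _ _ _) _ => //.
    apply: emeasurable_funB; exact/measurable_EFinP.
  have := @ge0_le_integral _ _ _ mu setT measurableT
    (fun u => `|(rho (y - L u))%:E - (rho (y' - L u))%:E|%E) (fun _ => (Lr * del)%:E).
  rewrite integral_cst //.
  have -> : forall M1, M1 = mu [set: borel X] -> ((Lr * del)%:E * M1 = (Lr * del)%:E)%E.
    by move=> M1 ->; rewrite probability_setT mule1.
  move=> H; apply: H => //.
  - apply: measurableT_comp => //; apply: emeasurable_funB; exact/measurable_EFinP.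
  - by move=> u _; rewrite -EFinB abse_EFin lee_fin.
  - by [].
have m0 : 0 <= m by apply: fine_ge0; apply: integral_ge0 => u _; rewrite lee_fin sqr_ge0.
have E1 : 1 <= expR (normG Gamma y ^+ 2 + m).
  have := expR_ge1Dx (normG Gamma y ^+ 2 + m); have := sqr_ge0 (normG Gamma y); lra.
have E1' : 1 <= expR (normG Gamma y' ^+ 2 + m).
  have := expR_ge1Dx (normG Gamma y' ^+ 2 + m); have := sqr_ge0 (normG Gamma y'); lra.
have -> : expR (normG Gamma y ^+ 2 + normG Gamma y' ^+ 2 + 2 * m) =
  expR (normG Gamma y ^+ 2 + m) * expR (normG Gamma y' ^+ 2 + m).
  by rewrite -expRD; congr expR; ring.
have pt : forall u : borel X,
    `|post_density mu rho L y u - post_density mu rho L y' u| <=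
    (Lr * C0 + `|M| * Lr * C0 ^+ 2 + 1) * del *
      (expR (normG Gamma y ^+ 2 + m) * expR (normG Gamma y' ^+ 2 + m)).
  move=> u; rewrite /post_density -/Z -/Z'.
  apply: final_alg => //; exact: ltW (rpos _).
rewrite Lnorm.unlock /=.
case: ifPn => _; last first.
  rewrite lee_fin; apply: mulr_ge0; last exact: mulr_ge0 (ltW (expR_gt0 _)) (ltW (expR_gt0 _)).
  apply: mulr_ge0 => //; apply: addr_ge0; last lra.
  apply: addr_ge0; first exact: mulr_ge0 (ltW C00).
  apply: mulr_ge0; first exact: mulr_ge0.
  exact: sqr_ge0.
apply/ess_sup_inf.ess_supP; apply: nearW => u /=.
by rewrite lee_fin; exact: pt.
Qed.
End Main.

Theorem mainTheorem9 (R : realType) (d : nat) (Gamma : 'M[R]_d)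
  (rho : 'cV[R]_d -> R) :
  sym_pos_def Gamma -> noise_assumptions Gamma rho ->
  exists C : R, 0 < C /\
  forall (X : completeNormedModType R)
    (mu : probability (borel X) R) (L : X -> 'cV[R]_d),
    (exists D : set X, countable D /\ dense D) ->
    (forall i : 'I_d, measurable_fun [set: borel X] (fun u : borel X => L u i 0)) ->
    (\int[mu]_(u in [set: borel X]) ((normG Gamma (L u)) ^+ 2)%:E < +oo)%E ->
    forall y y' : 'cV[R]_d,
      (Lnorm mu +oo (fun u : borel X =>
          (post_density mu rho L y u - post_density mu rho L y' u)%:E)
       <= (C * normG Gamma (y - y')
             * expR (normG Gamma y ^+ 2 + normG Gamma y' ^+ 2
                     + 2 * L2norm_sq mu Gamma L))%:E)%E.
Proof.
move=> spd [rpos [[Lr [Lr0 Hlip]] [[M HM] [C0 [C00 HC]]]]].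
exists (Lr * C0 + `|M| * Lr * C0 ^+ 2 + 1); split.
  have h1 : 0 <= Lr * C0 by apply: mulr_ge0 => //; exact: ltW.
  have h2 : 0 <= `|M| * Lr * C0 ^+ 2.
    by apply: mulr_ge0; [exact: mulr_ge0 | exact: sqr_ge0].
  lra.
move=> X mu L _ mL Lfin y y'.
exact: (@diff_bound R d Gamma rho spd Lr C0 M rpos Lr0 Hlip HM C00 HC X mu L mL Lfin y y').
Qed.
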